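(* With notation as in the context, let $N$ be a $\Gamma$-module and consider the map $\circ\pi\colon\mathcal{H}om_\Gamma(\mathcal{P}_{\le n},N)\to\mathcal{H}om_\Gamma(\mathcal{P},N)$. Use the identifications $\mathrm{H}^i(\mathcal{H}om_\Gamma(\mathcal{P},N))\cong\mathrm{Ext}^i_\Gamma(M,N)$ and, since $\mathcal{P}_{\le n}[-n]=\mathcal{P}$, $\mathrm{H}^{i+n}(\mathcal{H}om_\Gamma(\mathcal{P}_{\le n},N))\cong\mathrm{Ext}^i_\Gamma(M,N)$. Then: (1) The map $\mathrm{Hom}_\Gamma(M,N)\to\mathrm{Ext}^n_\Gamma(M,N)$ induced by $\mathrm{H}^n(\circ\pi)$ is surjective, and its kernel is $\operatorname{Im}(\circ d_0)$, where $\mathrm{Hom}_\Gamma(M,N)$ is identified with $\ker(\circ d_1\colon\mathrm{Hom}_\Gamma(P_0,N)\to\mathrm{Hom}_\Gamma(P_1,N))\subseteq \mathrm{Hom}_\Gamma(P_0,N)$ and $\circ d_0\colon\mathrm{Hom}_\Gamma(P_{n-1},N)\to\mathrm{Hom}_\Gamma(P_0,N)$ is precomposition with $d_0$. (2) For every $i>0$, the map $\mathrm{Ext}^i_\Gamma(M,N)\to\mathrm{Ext}^{i+n}_\Gamma(M,N)$ induced by $\mathrm{H}^{i+n}(\circ\pi)$ is an isomorphism.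
   Context: $k$ is a field, $\Gamma$ a $k$-algebra (right modules), $M$ a $\Gamma$-module, $n\ge1$. Given a complex of finitely generated projectives $\mathrm{P}=(0\to P_{n-1}\xrightarrow{d_{n-1}}\cdots\xrightarrow{d_1}P_0\to0)$, $P_i$ in degree $-i$, and $\alpha\colon P_0\to M$, $\beta\colon M\to P_{n-1}$ with $0\to M\xrightarrow{\beta}P_{n-1}\to\cdots\to P_0\xrightarrow{\alpha}M\to0$ exact; $d_0=\beta\circ\alpha$. $\mathcal{P}$ is the projective resolution of $M$ with a copy of $P_i$ (the $\ell$-th copy) in degree $-(\ell n+i)$ for $\ell\ge0$, $0\le i\le n-1$, differential $(-1)^{\ell n}d_i$ from the $\ell$-th copy of $P_i$ to the $\ell$-th copy of $P_{i-1}$ ($i\ge1$) and $(-1)^{\ell n}d_0$ from the $(\ell+1)$-th copy of $P_0$ to the $\ell$-th copy of $P_{n-1}$. $\mathcal{P}_{\le n}$ is the brutal truncation of $\mathcal{P}$ consisting of all copies with $\ell\ge1$ (same degrees and differentials), and $\pi\colon\mathcal{P}\to\mathcal{P}_{\le n}$ is the projection, with kernel the $0$-th copy. $\mathcal{H}om_\Gamma(-,N)$ denotes the Hom complex, graded so that $\mathrm{H}^i(\mathcal{H}om_\Gamma(\mathcal{P},N))\cong\mathrm{Ext}^i_\Gamma(M,N)$; $[1]$ shifts to the left with a sign on the differential. *)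

(* Defs.v *)
From HB Require Import structures.
From mathcomp Require Import all_boot all_algebra.
Set Implicit Arguments. Unset Strict Implicit. Unset Printing Implicit Defensive.
Import GRing.Theory.
Local Open Scope ring_scope.

(* Right Gamma-modules are modelled as left modules over the converse ring
   Gamma^c; Gamma-linear maps X -> Y are {linear X -> Y}.  In this file R
   stands for Gamma^c. *)
Section Defs.
Variable R : pzRingType.

Definition projective_mod (X : lmodType R) : Prop :=
  forall (A B : lmodType R) (g : {linear A -> B}),
    (forall b, exists a, g a = b) ->
    forall f : {linear X -> B}, exists h : {linear X -> A}, forall x, g (h x) = f x.

Definition fin_gen_mod (X : lmodType R) : Prop :=
  exists s : seq X, forall x : X, exists c : seq R,
    x = \sum_(j < size s) c`_j *: s`_j.

(* Data: n >= 1, the modules P_0,...,P_{n-1} (P i for i <= n.-1),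
   d i : P_{i+1} -> P_i  (this is the paper's d_{i+1}), alpha, beta. *)
Variables (n : nat) (P : nat -> lmodType R) (M N : lmodType R)
  (d : forall i, {linear P i.+1 -> P i})
  (alpha : {linear P 0 -> M}) (beta : {linear M -> P n.-1}).

Definition d0 (x : P 0) : P n.-1 := beta (alpha x).

Definition exact_at_P0 : Prop :=
  match n.-1 as m0 return (M -> P m0) -> Prop with
  | 0 => fun b => forall x : P 0, alpha x = 0 <-> exists y : M, b y = x
  | _.+1 => fun _ => forall x : P 0, alpha x = 0 <-> exists y : P 1, d 0 y = x
  end beta.

Definition exact_at_top : Prop :=
  match n.-1 as m0 return (M -> P m0) -> Prop with
  | 0 => fun _ => True
  | m'.+1 => fun b => forall x : P m'.+1, d m' x = 0 <-> exists y : M, b y = x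
  end beta.

Definition exact_mid : Prop :=
  forall i, (i.+2 < n)%N ->
    forall x : P i.+1, d i x = 0 <-> exists y : P i.+2, d i.+1 y = x.

Definition res_exact : Prop :=
  [/\ injective beta, (forall y : M, exists x, alpha x = y),
      exact_at_P0, exact_mid & exact_at_top].

(* The resolution \mathcal P : the l-th copy of P_i sits in degree -(l n + i);
   differentials (-1)^{l n} d_i  (copy l of P_i -> copy l of P_{i-1}) and
   (-1)^{l n} d_0 (copy l+1 of P_0 -> copy l of P_{n-1}).
   A cochain of Hom(\mathcal P, N) in degree l n + i (i < n) is a
   Gamma-linear f : P_i -> N. *)
Definition sgn (l : nat) : R := (-1) ^+ (l * n).

Definition castP i j (e : i = j) (x : P i) : P j := eq_rect i P x j e.

Definition cocycle (l i : nat) (f : P i -> N) : Prop :=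
  (forall x : P i.+1, (i < n.-1)%N -> f (sgn l *: d i x) = 0) /\
  (forall (e : n.-1 = i) (x : P 0), f (castP e (sgn l *: d0 x)) = 0).

(* f (in degree l n + i) is a coboundary in the Hom complex of the brutal
   truncation of \mathcal P keeping the copies l >= lo (lo = 0: \mathcal P
   itself; lo = 1: \mathcal P_{<= n}); only meaningful for l >= lo. *)
Definition coboundary (lo l i : nat) : (P i -> N) -> Prop :=
  match i as i0 return (P i0 -> N) -> Prop with
  | 0 => fun f =>
      if (lo < l)%N then
        exists g : {linear P n.-1 -> N}, forall x, f x = g (sgn l.-1 *: d0 x)
      else forall x, f x = 0
  | i'.+1 => fun f =>
      exists g : {linear P i' -> N}, forall x, f x = g (sgn l *: d i' x)
  end.

End Defs.

Arguments cocycle {R n P M N} d alpha beta l%_N i%_N f.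
Arguments coboundary {R n P M N} d alpha beta lo%_N l%_N i%_N _.

(* Main.v *)
Require Import Defs.
From HB Require Import structures.
From mathcomp Require Import all_boot all_algebra.
Import GRing.Theory.
Local Open Scope ring_scope.

Lemma sign_change (R : pzRingType) (U V : lmodType R) (g : {linear U -> V}) (a b : nat) :
  exists g' : {linear U -> V}, forall y, g' ((-1)^+a *: y) = g ((-1)^+b *: y).
Proof.
rewrite -(signr_odd _ a) -(signr_odd _ b).
case: (odd a); case: (odd b); rewrite ?expr0 ?expr1.
- by exists g.
- by exists (\- g)%R => y; rewrite !linearZ_LR /= scaleN1r scale1r opprK.
- by exists (\- g)%R => y; rewrite !linearZ_LR /= scaleN1r scale1r.
- by exists g.
Qed.

Lemma sign_zero (R : pzRingType) (U V : lmodType R) (f : {linear U -> V}) (a : nat) y :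
  f ((-1)^+a *: y) = 0 <-> f y = 0.
Proof.
rewrite linearZ_LR; split => H; last by rewrite H scaler0.
by rewrite -[f y]scale1r -(signrMK a 1) mulr1 -scalerA H scaler0.
Qed.

Lemma cocycle_l (R : pzRingType) n (P : nat -> lmodType R) (M N : lmodType R)
  (d : forall i, {linear P i.+1 -> P i})
  (alpha : {linear P 0%N -> M}) (beta : {linear M -> P n.-1}) l l' i (f : {linear P i -> N}) :
  cocycle d alpha beta l i f -> cocycle d alpha beta l' i f.
Proof.
rewrite /cocycle /sgn; case=> H1 H2; split.
  by move=> x lt; apply/sign_zero; have /sign_zero := H1 x lt.
move=> e x; move: (H2 e x); case: i / e f {H1 H2} => f /=.
by move/sign_zero => H; apply/sign_zero.
Qed.

Section Aux.
Variables (R : pzRingType) (P : nat -> lmodType R) (M : lmodType R)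
  (d : forall i, {linear P i.+1 -> P i}) (alpha : {linear P 0%N -> M}).

Lemma aux0 m (b : M -> P m)
  (ex : match m as m0 return (M -> P m0) -> Prop with
  | 0 => fun b => forall x : P 0, alpha x = 0 <-> exists y : M, b y = x
  | _.+1 => fun _ => forall x : P 0, alpha x = 0 <-> exists y : P 1, d 0 y = x
  end b) (e : m = 0%N) y : alpha (eq_rect m P (b y) 0%N e) = 0.
Proof. subst m => /=; by apply/ex; exists y. Qed.

Lemma aux1 m (b : M -> P m)
  (ex : match m as m0 return (M -> P m0) -> Prop with
  | 0 => fun b => forall x : P 0, alpha x = 0 <-> exists y : M, b y = x
  | _.+1 => fun _ => forall x : P 0, alpha x = 0 <-> exists y : P 1, d 0 y = x
  end b) (lt : (0 < m)%N) y : alpha (d 0 y) = 0.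
Proof. by case: m b ex lt => // m b ex _; apply/ex; exists y. Qed.
End Aux.

Theorem lemma3p7 (k : fieldType) (Gamma : algType k) (n : nat)
  (P : nat -> lmodType Gamma^c) (M N : lmodType Gamma^c)
  (d : forall i, {linear P i.+1 -> P i})
  (alpha : {linear P 0%N -> M}) (beta : {linear M -> P n.-1}) :
  (0 < n)%N ->
  (forall i, (i < n)%N -> projective_mod (P i) /\ fin_gen_mod (P i)) ->
  res_exact d alpha beta ->
  (* (1): Hom(M,N) = cocycles of Hom(P_{<=n},N) in degree n (copy 1 of P_0);
     the map to Ext^n = H^n(Hom(P,N)) sends w to the class of w o pi = w *)
  ((forall z : {linear P 0%N -> N}, cocycle d alpha beta 1 0 z ->
      exists w : {linear P 0%N -> N}, cocycle d alpha beta 1 0 w /\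
        coboundary d alpha beta 0 1 0 (fun x => w x - z x)) /\
   (forall w : {linear P 0%N -> N},
      (cocycle d alpha beta 1 0 w /\ coboundary d alpha beta 0 1 0 w) <->
      exists g : {linear P n.-1 -> N}, forall x, w x = g (d0 alpha beta x))) /\
  (* (2): degree i = l n + r; Ext^i -> Ext^{i+n}, cochain-level identity
     (shift identification followed by o pi) *)
  (forall i, (0 < i)%N ->
     let l := (i %/ n)%N in let r := (i %% n)%N in
     (forall z : {linear P r -> N}, cocycle d alpha beta l.+1 r z ->
        exists w : {linear P r -> N}, cocycle d alpha beta l r w /\
          coboundary d alpha beta 0 l.+1 r (fun x => w x - z x)) /\
     (forall w : {linear P r -> N}, cocycle d alpha beta l r w ->
        coboundary d alpha beta 0 l.+1 r w -> coboundary d alpha beta 0 l r w)).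
Proof.
move=> n0 _ [binj asurj ex0 exmid extop].
split; [split|].
- move=> z cz; exists z; split => //=.
  by exists \0%R => x /=; rewrite subrr.
- move=> w; split.
    case=> _ /= [g Hg]; exists g => x; rewrite Hg /sgn mul0n expr0 scale1r.
    by [].
  case=> g Hg; split; last first.
    by exists g => x; rewrite Hg /sgn mul0n expr0 scale1r.
  split.
    move=> x lt; rewrite Hg /d0 -linearZ_LR /=.
    by rewrite (@aux1 _ _ _ _ _ _ _ ex0 lt) !linear0.
  move=> e x; rewrite Hg /d0 -linearZ_LR /=.
  by rewrite (@aux0 _ _ _ _ _ _ _ ex0) !linear0.
move=> i i0 l r.
have Hi : i = (l * n + r)%N by rewrite /l /r -divn_eq.
clearbody l r; split.
  move=> z cz; exists z; split; first exact: cocycle_l cz.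
  case: r z cz {Hi} => [|r] z cz /=.
    by exists \0%R => x /=; rewrite subrr.
  by exists \0%R => x /=; rewrite subrr.
move=> w _; case: r w Hi => [|r] w Hi /=.
  case: l Hi => [|l] Hi; first by rewrite Hi in i0.
  case=> g Hg; have [g' Hg'] := @sign_change _ _ _ g (l.+1.-1 * n) (l.+1 * n).
  by exists g' => x; rewrite Hg /sgn Hg'.
case=> g Hg; have [g' Hg'] := @sign_change _ _ _ g (l * n) (l.+1 * n).
by exists g' => x; rewrite Hg /sgn Hg'.
Qed.
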